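(* Fix the following data: - a power vector $\bm{p}\in\mathbb{R}^n_{>0}$ and a demand vector $\bm{d}\in\mathbb{R}^m_{>0}$; - an association $\kappa$ in which every UE is served by at least one cell and every cell serves at least one UE; - a UE $u$ and a cell $c\notin\mathcal{I}_u$. Let $\tilde{\bm{x}}\in\mathbb{R}^n_{\ge0}$ satisfy $\tilde{\bm{x}}=\bm{f}(\bm{h}(\tilde{\bm{x}}))$, and let $\bm{x}\in\mathbb{R}^n_{\ge0}$ satisfy $\bm{x}=\bm{f}^+(\bm{h}^+(\bm{x}))$. Define the iteration $\bm{x}^{(0)}=\tilde{\bm{x}}$ and $\bm{x}^{(k)}=\bm{f}(\bm{h}^+(\bm{x}^{(k-1)}))$ for $k\ge1$. If there exists $k\ge1$ with $f^+_c(\bm{h}^+(\bm{x}^{(k)}))\le x^{(k)}_c$, then $\bm{x}\le\tilde{\bm{x}}$, that is, $x_i\le\tilde{x}_i$ for all $i\in\mathcal{I}$ and $\bm{x}\ne\tilde{\bm{x}}$.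
   Context: Cellular network model. $\mathcal{I}$ is a set of $n$ cells and $\mathcal{J}$ a set of $m$ UEs. The association $\kappa\in\{0,1\}^{n\times m}$ gives $\mathcal{I}_j=\{i:\kappa_{ij}=1\}$ and $\mathcal{J}_i=\{j:\kappa_{ij}=1\}$. $M,B>0$ are constants, $\sigma^2>0$ is the noise power and $g_{ij}>0$ are the channel gains. With $\bm{p},\bm{d}$ fixed, define for $\bm{x}\in\mathbb{R}^n_{\ge0}$ and $\bm{\gamma}\in\mathbb{R}^m_{>0}$ the maps before adding the link: - $h_j(\bm{x})=\dfrac{\sum_{i\in\mathcal{I}_j}p_ig_{ij}}{\sum_{k\in\mathcal{I}\setminus\mathcal{I}_j}p_kg_{kj}x_k+\sigma^2}$; - $f_i(\bm{\gamma})=\sum_{j\in\mathcal{J}_i}\dfrac{d_j}{MB\log_2(1+\gamma_j)}$. The maps after letting cell $c$ additionally serve UE $u$ are: - $h^+_u(\bm{x})=\dfrac{\sum_{i\in\mathcal{I}_u\cup\{c\}}p_ig_{iu}}{\sum_{k\in\mathcal{I}\setminus(\mathcal{I}_u\cup\{c\})}p_kg_{ku}x_k+\sigma^2}$, and $h^+_j=h_j$ for $j\ne u$; - $f^+_c(\bm{\gamma})=\sum_{j\in\mathcal{J}_c\cup\{u\}}\dfrac{d_j}{MB\log_2(1+\gamma_j)}$, and $f^+_i=f_i$ for $i\ne c$. Vectors are $\bm{h}=(h_j)_j$, $\bm{f}=(f_i)_i$, and similarly for $\bm{h}^+$ and $\bm{f}^+$. It is known, and assumed here, that $\bm{f}\circ\bm{h}$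 and $\bm{f}^+\circ\bm{h}^+$ are standard interference functions, each with a unique fixed point. The vector inequality $\bm{x}\le\tilde{\bm{x}}$ means componentwise $\le$ with strict inequality in at least one component. *)

(* Defs.v *)
From HB Require Import structures.
From mathcomp Require Import all_boot all_order all_algebra.
From mathcomp Require Import reals exp.
Set Implicit Arguments. Unset Strict Implicit. Unset Printing Implicit Defensive.
Import Order.TTheory GRing.Theory Num.Theory.
Local Open Scope ring_scope.

(* Vectors over R indexed by cells 'I_n or UEs 'I_m are functions. *)

Definition log2 (R : realType) (x : R) : R := ln x / ln 2.

Definition kappa_add (n m : nat) (kappa : 'I_n -> 'I_m -> bool)
  (c : 'I_n) (u : 'I_m) : 'I_n -> 'I_m -> bool :=
  fun i j => kappa i j || ((i == c) && (j == u)).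

Definition hmap (R : realType) (n m : nat) (kappa : 'I_n -> 'I_m -> bool)
  (p : 'I_n -> R) (g : 'I_n -> 'I_m -> R) (sigma2 : R)
  (x : 'I_n -> R) : 'I_m -> R :=
  fun j => (\sum_(i | kappa i j) p i * g i j) /
           (\sum_(k | ~~ kappa k j) p k * g k j * x k + sigma2).

Definition fmap (R : realType) (n m : nat) (kappa : 'I_n -> 'I_m -> bool)
  (d : 'I_m -> R) (M B : R) (gamma : 'I_m -> R) : 'I_n -> R :=
  fun i => \sum_(j | kappa i j) d j / (M * B * log2 (1 + gamma j)).

Definition nonneg (R : realType) (I : Type) (x : I -> R) : Prop :=
  forall i, 0 <= x i.

Definition vle (R : realType) (I : Type) (x y : I -> R) : Prop :=
  forall i, x i <= y i.

Definition vlt_some (R : realType) (I : Type) (x y : I -> R) : Prop :=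
  (forall i, x i <= y i) /\ (exists i, x i < y i).

Definition standard_interference (R : realType) (n : nat)
  (T : ('I_n -> R) -> ('I_n -> R)) : Prop :=
  [/\ (forall x, nonneg x -> forall i, 0 < T x i),
      (forall x y, nonneg x -> vle x y -> vle (T x) (T y)) &
      (forall x (a : R), nonneg x -> 1 < a ->
         forall i, T (fun k => a * x k) i < a * T x i)].

Definition unique_fixed_point (R : realType) (n : nat)
  (T : ('I_n -> R) -> ('I_n -> R)) : Prop :=
  exists x, [/\ nonneg x, T x = x &
               forall y, nonneg y -> T y = y -> y = x].

(* Main.v *)
Require Import Defs.
From mathcomp Require Import all_boot all_order all_algebra.
From mathcomp Require Import reals exp.
Import Order.TTheory GRing.Theory Num.Theory.
Local Open Scope ring_scope.

Lemma exmax (R : realType) (n : nat) (F : 'I_n -> R) (i0 : 'I_n) :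
  exists i, forall j, F j <= F i.
Proof.
case: (@arg_maxP _ _ _ i0 xpredT F erefl) => i _ H.
by exists i => j; apply: H.
Qed.

Section S_T1.
Variable R : realType.

Lemma log2_gt0 (a : R) : 0 < a -> 0 < log2 (1 + a).
Proof.
move=> a0; rewrite /log2 divr_gt0 // ln_gt0 //.
  by rewrite ltrDl.
by rewrite ltr1n.
Qed.

Lemma log2_lt (a b : R) : 0 < a -> a < b -> log2 (1 + a) < log2 (1 + b).
Proof.
move=> a0 ab; rewrite /log2 ltr_pM2r ?invr_gt0 ?ln_gt0 ?ltr1n //.
rewrite ltr_ln ?posrE ?ltrD2l //; apply: addr_gt0 => //; exact: lt_trans ab.
Qed.

Lemma log2_le (a b : R) : 0 < a -> a <= b -> log2 (1 + a) <= log2 (1 + b).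
Proof.
move=> a0; rewrite le_eqVlt => /orP[/eqP->//|ab].
exact/ltW/log2_lt.
Qed.
End S_T1.

Section S_T2.
Variable R : realType.

Lemma divle (d x y : R) : 0 < d -> 0 < x -> x <= y -> d / y <= d / x.
Proof.
move=> d0 x0 xy; rewrite ler_pM2l // lef_pV2 ?posrE //; exact: lt_le_trans xy.
Qed.

Lemma divlt (d x y : R) : 0 < d -> 0 < x -> x < y -> d / y < d / x.
Proof.
move=> d0 x0 xy; rewrite ltr_pM2l // ltf_pV2 ?posrE //; exact: lt_trans xy.
Qed.

Variables (n m : nat) (M B s : R) (g : 'I_n -> 'I_m -> R) (p : 'I_n -> R) (d : 'I_m -> R).
Hypotheses (M0 : 0 < M) (B0 : 0 < B) (s0 : 0 < s) (g0 : forall i j, 0 < g i j)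
  (p0 : forall i, 0 < p i) (d0 : forall j, 0 < d j).

Lemma mbl_pos (a : R) : 0 < a -> 0 < M * B * log2 (1 + a).
Proof. by move=> a0; apply: mulr_gt0; [apply: mulr_gt0|apply: log2_gt0]. Qed.

Lemma den_pos (K : 'I_n -> 'I_m -> bool) (y : 'I_n -> R) j : nonneg y ->
  0 < \sum_(k | ~~ K k j) p k * g k j * y k + s.
Proof.
move=> y0; apply: ltr_wpDl => //; apply: sumr_ge0 => k _.
by rewrite mulr_ge0 // mulr_ge0 // ltW.
Qed.

Lemma num_pos (K : 'I_n -> 'I_m -> bool) j : (exists i, K i j) -> 0 < \sum_(i | K i j) p i * g i j.
Proof.
move=> [i Ki]; rewrite (bigD1 i) //= ltr_wpDr //.
  by apply: sumr_ge0 => k _; rewrite mulr_ge0 // ltW.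
by rewrite mulr_gt0.
Qed.

Lemma h_pos (K : 'I_n -> 'I_m -> bool) y j : nonneg y -> (exists i, K i j) -> 0 < hmap K p g s y j.
Proof. by move=> y0 e; rewrite /hmap divr_gt0 ?num_pos ?den_pos. Qed.

Lemma h_anti (K : 'I_n -> 'I_m -> bool) y y' j : nonneg y -> vle y y' -> (exists i, K i j) ->
  hmap K p g s y' j <= hmap K p g s y j.
Proof.
move=> y0 yy e; rewrite /hmap divle ?num_pos ?den_pos //.
rewrite lerD2r; apply: ler_sum => k _; rewrite ler_pM2l ?mulr_gt0 //.
Qed.

Lemma f_pos (K : 'I_n -> 'I_m -> bool) (gam : 'I_m -> R) i : (exists j, K i j) -> (forall j, 0 < gam j) ->
  0 < fmap K d M B gam i.
Proof.
move=> [j Kj] gp.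
have hp k : 0 < d k / (M * B * log2 (1 + gam k)).
  by apply: divr_gt0; [exact: d0 | exact: mbl_pos].
rewrite /fmap (bigD1 j) //=; apply: ltr_wpDr => //.
by apply: sumr_ge0 => k _; apply: ltW.
Qed.

Lemma f_anti (K : 'I_n -> 'I_m -> bool) (gam gam' : 'I_m -> R) : (forall j, 0 < gam j) -> vle gam gam' ->
  vle (fmap K d M B gam') (fmap K d M B gam).
Proof.
move=> gp gg i; rewrite /fmap; apply: ler_sum => j _.
by rewrite divle ?mbl_pos // ler_pM2l ?mulr_gt0 // log2_le.
Qed.

Lemma f_strict (K : 'I_n -> 'I_m -> bool) (gam gam' : 'I_m -> R) i j0 : (forall j, 0 < gam j) -> vle gam gam' ->
  K i j0 -> gam j0 < gam' j0 -> fmap K d M B gam' i < fmap K d M B gam i.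
Proof.
move=> gp gg Kj lt; rewrite /fmap (bigD1 j0) //= [X in _ < X](bigD1 j0) //=.
apply: ltr_leD.
  by rewrite divlt ?mbl_pos // ltr_pM2l ?mulr_gt0 // log2_lt.
apply: ler_sum => j _.
by rewrite divle ?mbl_pos // ler_pM2l ?mulr_gt0 // log2_le.
Qed.

End S_T2.

Section S_T3.
Variable R : realType.

Lemma fraclt (a a' b b' : R) : 0 < a -> a < a' -> 0 < b' -> b' <= b -> a / b < a' / b'.
Proof.
move=> a0 aa b0 bb; apply: (@le_lt_trans _ _ (a / b')).
  exact: divle.
by rewrite ltr_pM2r ?invr_gt0.
Qed.

Variables (n m : nat) (M B s : R) (g : 'I_n -> 'I_m -> R) (p : 'I_n -> R) (d : 'I_m -> R).
Hypotheses (M0 : 0 < M) (B0 : 0 < B) (s0 : 0 < s) (g0 : forall i j, 0 < g i j)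
  (p0 : forall i, 0 < p i) (d0 : forall j, 0 < d j).
Variables (kappa : 'I_n -> 'I_m -> bool) (u : 'I_m) (c : 'I_n).
Hypothesis kcu : ~~ kappa c u.

Lemma h_add_ne y j : j != u -> hmap (kappa_add kappa c u) p g s y j = hmap kappa p g s y j.
Proof.
move=> ju; have E : forall i, kappa_add kappa c u i j = kappa i j.
  by move=> i; rewrite /kappa_add (negbTE ju) andbF orbF.
rewrite /hmap [X in X / _](eq_bigl (fun i => kappa i j)) //.
by rewrite [X in _ / (X + _)](eq_bigl (fun i => ~~ kappa i j)) // => k; rewrite E.
Qed.

Lemma h_add_u y : nonneg y -> (exists i, kappa i u) ->
  hmap kappa p g s y u < hmap (kappa_add kappa c u) p g s y u.
Proof.
move=> y0 e; rewrite /hmap /kappa_add eqxx.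
rewrite [X in _ < X / _](bigD1 c) ?eqxx ?orbT //=.
rewrite [X in _ < _ / (X + _)](eq_bigl (fun k => ~~ kappa k u && (k != c))); last first.
  by move=> k; case: (eqVneq k c) => [->|]; rewrite ?(negbTE kcu) //= orbF ?andbT ?orbF //.
rewrite [X in _ < (_ + X) / _](eq_bigl (fun i => kappa i u)); last first.
  by move=> k; case: (eqVneq k c) => [->|]; rewrite ?(negbTE kcu) //= orbF ?andbT ?orbF //.
apply: fraclt.
- exact: num_pos.
- rewrite [X in _ < X]addrC ltrDl mulr_gt0 //.
- apply: ltr_wpDl => //; apply: sumr_ge0 => k _.
  by rewrite mulr_ge0 // mulr_ge0 // ltW.
- rewrite [X in _ <= X + _](bigD1 c) //= -addrA lerDr.
  by rewrite mulr_ge0 // mulr_ge0 // ltW.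
Qed.
End S_T3.

Lemma fp_le (R : realType) (n : nat) (T : ('I_n -> R) -> 'I_n -> R) x z :
  standard_interference T -> nonneg x -> T x = x -> nonneg z -> vle (T z) z -> vle x z.
Proof.
move=> [Tp Tm Ts] x0 Tx z0 Tz i0.
have zp : forall i, 0 < z i by move=> i; exact: lt_le_trans (Tp _ z0 i) (Tz i).
have [im H] := @exmax R n (fun j => x j / z j) i0.
have [le1|gt1] := leP (x im / z im) 1.
  have := le_trans (H i0) le1; by rewrite ler_pdivrMr // mul1r.
exfalso.
set a := x im / z im in gt1 H.
have xa : vle x (fun k => a * z k).
  by move=> j; have := H j; rewrite ler_pdivrMr // mulrC.
have h1 := Tm _ _ x0 xa im.
have h2 := Ts _ _ z0 gt1 im.
have h3 : a * T z im <= a * z im by rewrite ler_pM2l ?(lt_trans ltr01) //.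
have : x im < x im.
  have e : x im = T x im by rewrite Tx.
  rewrite {1}e; apply: (le_lt_trans h1); apply: (lt_le_trans h2).
  by apply: (le_trans h3); rewrite /a divfK // gt_eqF.
by rewrite ltxx.
Qed.

Theorem theorem2 (R : realType) (n m : nat)
  (M B sigma2 : R) (g : 'I_n -> 'I_m -> R)
  (p : 'I_n -> R) (d : 'I_m -> R)
  (kappa : 'I_n -> 'I_m -> bool) (u : 'I_m) (c : 'I_n)
  (xt x : 'I_n -> R) :
  0 < M -> 0 < B -> 0 < sigma2 ->
  (forall i j, 0 < g i j) ->
  (forall i, 0 < p i) -> (forall j, 0 < d j) ->
  (forall j, exists i, kappa i j) ->
  (forall i, exists j, kappa i j) ->
  ~~ kappa c u ->
  standard_interference
    (fun y => fmap kappa d M B (hmap kappa p g sigma2 y)) ->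
  unique_fixed_point
    (fun y => fmap kappa d M B (hmap kappa p g sigma2 y)) ->
  standard_interference
    (fun y => fmap (kappa_add kappa c u) d M B
                   (hmap (kappa_add kappa c u) p g sigma2 y)) ->
  unique_fixed_point
    (fun y => fmap (kappa_add kappa c u) d M B
                   (hmap (kappa_add kappa c u) p g sigma2 y)) ->
  nonneg xt -> xt = fmap kappa d M B (hmap kappa p g sigma2 xt) ->
  nonneg x ->
  x = fmap (kappa_add kappa c u) d M B (hmap (kappa_add kappa c u) p g sigma2 x) ->
  (exists k : nat, (1 <= k)%N /\
     let xk := iter k (fun y => fmap kappa d M B
                         (hmap (kappa_add kappa c u) p g sigma2 y)) xt in
     fmap (kappa_add kappa c u) d M B (hmap (kappa_add kappa c u) p g sigma2 xk) c
       <= xk c) ->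
  vlt_some x xt.
Proof.
move=> M0 B0 s0 g0 p0 d0 kj ki kcu _ _ STp _ xt0 Ext x0 Ex [k [k1 Hk]].
set K' := kappa_add kappa c u in STp Ex Hk *.
set S := (fun y => fmap kappa d M B (hmap K' p g sigma2 y)) in Hk.
have kj' : forall j, exists i, K' i j.
  by move=> j; have [i Ki] := kj j; exists i; rewrite /K' /kappa_add Ki.
have hpos : forall y, nonneg y -> forall j, 0 < hmap K' p g sigma2 y j.
  by move=> y y0 j; apply: h_pos.
have Spos : forall y, nonneg y -> nonneg (S y).
  by move=> y y0 i; apply/ltW/f_pos => //; apply: hpos.
have Smono : forall y y', nonneg y -> vle y y' -> vle (S y) (S y').
  move=> y y' y0 yy; apply: f_anti => //.
    by apply: hpos => j; apply: le_trans (y0 j) (yy j).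
  by move=> j; apply: h_anti.
have hle : forall y, nonneg y -> vle (hmap kappa p g sigma2 y) (hmap K' p g sigma2 y).
  move=> y y0 j; case: (eqVneq j u) => [->|ju].
    by apply/ltW/h_add_u.
  by rewrite /K' h_add_ne.
have hxt : forall j, 0 < hmap kappa p g sigma2 xt j by move=> j; apply: h_pos.
have S0 : vle (S xt) xt.
  by move=> i; rewrite {2}Ext; apply: f_anti => //; apply: hle.
have [i0 ki0] := kj u.
have S0s : S xt i0 < xt i0.
  rewrite {2}Ext; apply: (@f_strict _ _ _ _ _ _ M0 B0 d0 _ _ _ _ u) => //.
  exact: hle. all: try exact: h_add_u.
pose z k := iter k S xt.
have zn : forall k, nonneg (z k).
  elim=> [|k' IH] //=; exact: Spos.
have zdec : forall k, vle (z k.+1) (z k).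
  elim=> [|k' IH]; first exact: S0.
  exact: (Smono _ _ (zn k'.+1) IH).
have zxt : forall k, vle (z k) xt.
  elim=> [|k' IH] i //=; exact: le_trans (zdec k' i) (IH i).
have zS : forall k, vle (z k.+1) (S xt).
  elim=> [|k' IH] i //=; exact: le_trans (zdec k'.+1 i) (IH i).
have Tz : vle (fmap K' d M B (hmap K' p g sigma2 (z k))) (z k).
  move=> i; case: (eqVneq i c) => [->|ic]; first exact: Hk.
  apply: le_trans (zdec k i); rewrite le_eqVlt; apply/orP; left; apply/eqP; rewrite /z /= /S /fmap.
  apply: eq_bigl => j.
  by rewrite /K' /kappa_add (negbTE ic) andFb orbF.
have xz := @fp_le _ _ _ x (z k) STp x0 (esym Ex) (zn k) Tz.
split.
  by move=> i; apply: le_trans (xz i) (zxt k i).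
exists i0; apply: le_lt_trans (xz i0) _; apply: le_lt_trans S0s.
by case: k k1 {Hk Tz xz} => // k' _; exact: zS.
Qed.
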